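(* Let $\sigma$ be a countable relational signature containing a relation symbol $R$ of arity at least $2$, and let $k\geq1$ be an integer; if $k\geq2$ assume moreover that $\sigma$ contains a relation symbol $Q\neq R$. Let $\mathbf P=\{\mathcal A\in\mathbf S_\sigma:\mathcal A\text{ has at most }k\text{ connected components}\}$. Then $\mathbf P$ is not expressible in $FO(\sigma)$; every abstract logic $L(\sigma)\geq FO(\sigma)$ that can express $\mathbf P$ fails the $\aleph_0$-compactness property; and every such logic which is moreover closed under negation has no sound and complete proof system.
   Context: In a $\sigma$-structure $\mathcal A$, distinct $a,b$ are adjacent if both occur in some tuple of some relation $S^{\mathcal A}$, $S\in\sigma$; a path is a sequence of distinct elements each adjacent to the next; the connected components are the classes of the equivalence relation ``$a=b$ or there is a path from $a$ to $b$''. $\mathbf S_\sigma$ is the class of $\sigma$-structures. An abstract logic over $\sigma$ is a pair $(L(\sigma),\models_{L(\sigma)})$ with isomorphism-invariant satisfaction relation; a class is expressed by it if some sentence is satisfied exactly by its members; $L(\sigma)\geq FO(\sigma)$ means every first-order expressible class is $L(\sigma)$-expressible; $\aleph_0$-compactness: every countable finitely satisfiable set of sentences is satisfiable; closed under negation: each sentence has a sentence true exactly where it is false. A proof system $(\Pi,p,c)$ assigns to each $\pi$ a finite sequence of premisses and a conclusion; sound: premisses semantically entail the conclusion; complete: whenever $\Gamma$ entails $\psi$ some $\pi$ has conclusion $\psi$ and all premisses in $\Gamma$. *)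

(* Defs.v *)
From Stdlib Require Import List Arith Lia.
From Stdlib Require Vectors.Fin.
Import ListNotations.

Set Implicit Arguments.

Definition countable (X : Type) : Prop :=
  exists f : X -> nat, forall x y, f x = f y -> x = y.

Record structure (Sym : Type) (ar : Sym -> nat) : Type := Structure {
  dom : Type;
  dom_ne : inhabited dom;
  rel : forall S : Sym, (Fin.t (ar S) -> dom) -> Prop
}.
Arguments dom {Sym ar} _.
Arguments rel {Sym ar} _ _ _.

Section Structures.
Variables (Sym : Type) (ar : Sym -> nat).

Definition isomorphic (A B : structure ar) : Prop :=
  exists (f : dom A -> dom B) (g : dom B -> dom A),
    (forall x, g (f x) = x) /\ (forall y, f (g y) = y) /\
    (forall (S : Sym) (t : Fin.t (ar S) -> dom A),
        rel A S t <-> rel B S (fun i => f (t i))).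

Definition adjacent (A : structure ar) (a b : dom A) : Prop :=
  a <> b /\
  exists (S : Sym) (t : Fin.t (ar S) -> dom A) (i j : Fin.t (ar S)),
    rel A S t /\ t i = a /\ t j = b.

Fixpoint chain {X : Type} (r : X -> X -> Prop) (l : list X) : Prop :=
  match l with
  | [] => True
  | x :: l' => match l' with
               | [] => True
               | y :: _ => r x y /\ chain r l'
               end
  end.

Definition is_path (A : structure ar) (l : list (dom A)) : Prop :=
  NoDup l /\ chain (adjacent A) l.

Definition connected (A : structure ar) (a b : dom A) : Prop :=
  a = b \/
  exists l : list (dom A), is_path A (a :: l) /\ l <> [] /\ last l a = b.

(* A has at most k connected components: there are at most k classes of
   the equivalence relation [connected], i.e. some list of at most k
   elements meets every class. *)
Definition at_most_k_components (k : nat) (A : structure ar) : Prop :=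
  exists reps : list (dom A),
    length reps <= k /\ forall a : dom A, exists b, In b reps /\ connected A a b.

Inductive formula : Type :=
| F_rel : forall S : Sym, (Fin.t (ar S) -> nat) -> formula
| F_eq : nat -> nat -> formula
| F_bot : formula
| F_imp : formula -> formula -> formula
| F_all : nat -> formula -> formula.

Definition update {D : Type} (e : nat -> D) (x : nat) (d : D) : nat -> D :=
  fun y => if Nat.eqb y x then d else e y.

Fixpoint fo_sat (A : structure ar) (e : nat -> dom A) (phi : formula) : Prop :=
  match phi with
  | @F_rel s v => rel A s (fun i => e (v i))
  | F_eq x y => e x = e y
  | F_bot => False
  | F_imp p q => fo_sat A e p -> fo_sat A e q
  | F_all x p => forall d : dom A, fo_sat A (update e x d) p
  end.

Fixpoint free_in (x : nat) (phi : formula) : Prop :=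
  match phi with
  | @F_rel s v => exists i, v i = x
  | F_eq y z => y = x \/ z = x
  | F_bot => False
  | F_imp p q => free_in x p \/ free_in x q
  | F_all y p => y <> x /\ free_in x p
  end.

Definition fo_sentence (phi : formula) : Prop := forall x, ~ free_in x phi.

Definition fo_expressible (P : structure ar -> Prop) : Prop :=
  exists phi : formula, fo_sentence phi /\
    forall A : structure ar, (forall e : nat -> dom A, fo_sat A e phi) <-> P A.

(* An abstract logic is a type L of sentences together with a satisfaction
   relation sat; isomorphism invariance is a separate hypothesis. *)
Definition iso_invariant (L : Type) (sat : structure ar -> L -> Prop) : Prop :=
  forall A B : structure ar, isomorphic A B -> forall phi, sat A phi <-> sat B phi.

Definition expresses (L : Type) (sat : structure ar -> L -> Prop)
  (P : structure ar -> Prop) : Prop :=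
  exists phi : L, forall A : structure ar, sat A phi <-> P A.

Definition extends_FO (L : Type) (sat : structure ar -> L -> Prop) : Prop :=
  forall P : structure ar -> Prop, fo_expressible P -> expresses sat P.

Definition satisfiable (L : Type) (sat : structure ar -> L -> Prop)
  (Gamma : L -> Prop) : Prop :=
  exists A : structure ar, forall phi, Gamma phi -> sat A phi.

Definition finitely_satisfiable (L : Type) (sat : structure ar -> L -> Prop)
  (Gamma : L -> Prop) : Prop :=
  forall l : list L, (forall phi, In phi l -> Gamma phi) ->
    exists A : structure ar, forall phi, In phi l -> sat A phi.

Definition countable_set (L : Type) (Gamma : L -> Prop) : Prop :=
  exists f : nat -> L, forall phi, Gamma phi -> exists n, f n = phi.

Definition aleph0_compact (L : Type) (sat : structure ar -> L -> Prop) : Prop :=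
  forall Gamma : L -> Prop, countable_set Gamma ->
    finitely_satisfiable sat Gamma -> satisfiable sat Gamma.

Definition closed_under_negation (L : Type) (sat : structure ar -> L -> Prop) : Prop :=
  forall phi : L, exists psi : L, forall A : structure ar, sat A psi <-> ~ sat A phi.

Definition entails (L : Type) (sat : structure ar -> L -> Prop)
  (Gamma : L -> Prop) (psi : L) : Prop :=
  forall A : structure ar, (forall phi, Gamma phi -> sat A phi) -> sat A psi.

(* A proof system (Pi, p, c): premisses p pi (finite sequence), conclusion c pi. *)
Definition proof_sound (L : Type) (sat : structure ar -> L -> Prop)
  (Pi : Type) (p : Pi -> list L) (c : Pi -> L) : Prop :=
  forall pi : Pi, entails sat (fun phi => In phi (p pi)) (c pi).

Definition proof_complete (L : Type) (sat : structure ar -> L -> Prop)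
  (Pi : Type) (p : Pi -> list L) (c : Pi -> L) : Prop :=
  forall (Gamma : L -> Prop) (psi : L), entails sat Gamma psi ->
    exists pi : Pi, c pi = psi /\ forall phi, In phi (p pi) -> Gamma phi.

Definition has_sound_complete_proof_system (L : Type)
  (sat : structure ar -> L -> Prop) : Prop :=
  exists (Pi : Type) (p : Pi -> list L) (c : Pi -> L),
    proof_sound sat p c /\ proof_complete sat p c.

End Structures.

(* Main.v *)
Require Import Defs.
From Stdlib Require Import List Arith Lia ZArith Classical ClassicalEpsilon FunctionalExtensionality.
From Stdlib Require Vectors.Fin.
Import ListNotations.

Definition fin_nat {n} (i : Fin.t n) : nat := proj1_sig (Fin.to_nat i).
Lemma fin_nat_lt {n} (i : Fin.t n) : fin_nat i < n.
Proof. unfold fin_nat. exact (proj2_sig (Fin.to_nat i)). Qed.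
Lemma fin_nat_of {p n} (h : p < n) : fin_nat (Fin.of_nat_lt h) = p.
Proof. unfold fin_nat. rewrite Fin.to_nat_of_nat. reflexivity. Qed.
Lemma fin_nat_inj {n} (i j : Fin.t n) : fin_nat i = fin_nat j -> i = j.
Proof. apply Fin.to_nat_inj. Qed.

Fixpoint all_fin (n : nat) : list (Fin.t n) :=
  match n with 0 => [] | S n' => Fin.F1 :: map Fin.FS (all_fin n') end.
Lemma all_fin_In n (i : Fin.t n) : In i (all_fin n).
Proof. induction i; simpl. left; auto. right. apply in_map. auto. Qed.
Lemma all_fin_NoDup n : NoDup (all_fin n).
Proof.
  induction n; simpl. constructor. constructor.
  - intro H. apply in_map_iff in H. destruct H as [x [H _]]. discriminate.
  - apply NoDup_map_NoDup_ForallPairs; auto. intros a b _ _ H. apply Fin.FS_inj; auto.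
Qed.
Lemma all_fin_length n : length (all_fin n) = n.
Proof. induction n; simpl; auto. rewrite length_map. auto. Qed.

Lemma chain_map_seq {X} (r : X -> X -> Prop) (f : nat -> X) : forall n s,
  (forall i, s <= i < s + n -> r (f i) (f (S i))) -> chain r (map f (seq s (S n))).
Proof.
  induction n; intros s H; simpl. auto.
  split. apply H; lia. apply (IHn (S s)). intros i Hi; apply H; lia.
Qed.


Section Gen.
Variables (Sym : Type) (ar : Sym -> nat).

Lemma connected_of_fun (A : structure ar) (f : nat -> dom A) n :
  (forall i j, i <= n -> j <= n -> f i = f j -> i = j) ->
  (forall i, i < n -> adjacent A (f i) (f (S i))) -> connected A (f 0) (f n).
Proof.
  intros Hinj Hadj. destruct n. left; auto. right.
  exists (map f (seq 1 (S n))). split; [|split].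
  - change (f 0 :: map f (seq 1 (S n))) with (map f (seq 0 (S (S n)))). split.
    + apply NoDup_map_NoDup_ForallPairs. intros a b Ha Hb. apply in_seq in Ha, Hb.
      apply Hinj; lia. apply seq_NoDup.
    + apply chain_map_seq. intros i Hi. apply Hadj. lia.
  - simpl. discriminate.
  - rewrite seq_S, map_app. simpl map. rewrite last_last. f_equal.
Qed.

Definition Not (p : formula ar) := F_imp p (F_bot ar).
Definition Or (p q : formula ar) := F_imp (Not p) q.
Definition And (p q : formula ar) := Not (F_imp p (Not q)).
Definition Ex (x : nat) (p : formula ar) := Not (F_all x (Not p)).
Definition Alls (l : list nat) (p : formula ar) := fold_right (@F_all _ ar) p l.
Definition Exs (l : list nat) (p : formula ar) := fold_right Ex p l.

Lemma sat_Not A e p : fo_sat A e (Not p) <-> ~ fo_sat A e p.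
Proof. simpl. tauto. Qed.
Lemma sat_Or A e p q : fo_sat A e (Or p q) <-> fo_sat A e p \/ fo_sat A e q.
Proof. simpl. tauto. Qed.
Lemma sat_And A e p q : fo_sat A e (And p q) <-> fo_sat A e p /\ fo_sat A e q.
Proof. simpl. tauto. Qed.
Lemma sat_Ex A e x p : fo_sat A e (Ex x p) <-> exists d, fo_sat A (update e x d) p.
Proof. simpl. split. intro H. apply NNPP. intro H'. apply H. intros d Hd. apply H'. eauto.
  intros [d Hd] H. exact (H d Hd). Qed.

Lemma update_same {D} (e : nat -> D) x d : update e x d x = d.
Proof. unfold update. rewrite Nat.eqb_refl. auto. Qed.
Lemma update_other {D} (e : nat -> D) x d y : y <> x -> update e x d y = e y.
Proof. unfold update. intro H. apply Nat.eqb_neq in H. rewrite H. auto. Qed.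

Lemma sat_Alls A l p : forall e, fo_sat A e (Alls l p) <->
  forall e', (forall y, ~ In y l -> e' y = e y) -> fo_sat A e' p.
Proof.
  induction l as [|x l IH]; intro e; simpl.
  - split. intros H e' He. replace e' with e; auto. apply functional_extensionality; intro; symmetry; auto.
    intro H. apply H. auto.
  - split.
    + intros H e' He. specialize (H (e' x)). rewrite IH in H. apply H.
      intros y Hy. destruct (Nat.eq_dec y x). subst. rewrite update_same; auto.
      rewrite update_other; auto. apply He. intros [H1|H1]; [congruence|tauto].
    + intros H d. rewrite IH. intros e' He. apply H. intros y Hy.
      rewrite He by tauto. apply update_other. intro; subst; tauto.
Qed.

Lemma sat_Exs A l p : forall e, fo_sat A e (Exs l p) <->
  exists e', (forall y, ~ In y l -> e' y = e y) /\ fo_sat A e' p.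
Proof.
  induction l as [|x l IH]; intro e; simpl.
  - split. intros H. exists e; auto. intros [e' [He H]]. replace e with e'; auto.
    apply functional_extensionality; intro; auto.
  - fold (Exs l p). rewrite (sat_Ex A e x (Exs l p)). split.
    + intros [d Hd]. rewrite IH in Hd. destruct Hd as [e' [He H]]. exists e'. split; auto.
      intros y Hy. rewrite He by tauto. apply update_other. intro; subst; tauto.
    + intros [e' [He H]]. exists (e' x). rewrite IH. exists e'. split; auto.
      intros y Hy. destruct (Nat.eq_dec y x). subst. rewrite update_same; auto.
      rewrite update_other; auto. apply He. intros [H1|H1]; [congruence|tauto].
Qed.

Fixpoint fv (phi : formula ar) : list nat :=
  match phi with
  | @F_rel _ _ s v => map v (all_fin (ar s))
  | F_eq _ x y => [x; y]
  | F_bot _ => []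
  | F_imp p q => fv p ++ fv q
  | F_all x p => fv p
  end.

Lemma fv_spec phi x : free_in x phi -> In x (fv phi).
Proof.
  induction phi; simpl; intro H.
  - destruct H as [i Hi]. subst. apply in_map. apply all_fin_In.
  - destruct H; subst; auto.
  - auto.
  - apply in_or_app. tauto.
  - tauto.
Qed.

Lemma free_Alls l p x : free_in x (Alls l p) -> ~ In x l /\ free_in x p.
Proof.
  induction l; simpl. tauto. intros [H1 H2]. apply IHl in H2. intuition.
Qed.

Lemma fo_expr_any (phi : formula ar) : fo_expressible (fun A => forall e, fo_sat A e phi).
Proof.
  exists (Alls (fv phi) phi). split.
  - intros x H. apply free_Alls in H. destruct H as [H1 H2]. apply H1. apply fv_spec; auto.
  - intro A. split.
    + intros H e. specialize (H e). apply sat_Alls with (e' := e) in H; auto.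
    + intros H e. apply sat_Alls. intros; auto.
Qed.

End Gen.
Arguments Not {Sym ar}. Arguments Or {Sym ar}. Arguments And {Sym ar}. Arguments Ex {Sym ar}.
Arguments Alls {Sym ar}. Arguments Exs {Sym ar}.
Arguments sat_Not {Sym ar}. Arguments sat_Or {Sym ar}. Arguments sat_And {Sym ar}. Arguments sat_Ex {Sym ar}.
Arguments sat_Alls {Sym ar}. Arguments sat_Exs {Sym ar}. Arguments fo_expr_any {Sym ar}.
Lemma last_irrel {X} (l : list X) a b : l <> [] -> last l a = last l b.
Proof. induction l; simpl; intro H. congruence. destruct l; auto. apply IHl. discriminate. Qed.
Lemma last_cons' {X} (b a : X) l : last (b :: l) a = last l b.
Proof. destruct l; auto. change (last (x :: l) a = last (x :: l) b). apply last_irrel. discriminate. Qed.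

Section EF.
Variables (Sym : Type) (ar : Sym -> nat) (R : Sym) (HR : 2 <= ar R).

Definition i0 : Fin.t (ar R) := Fin.of_nat_lt (Nat.lt_trans 0 1 _ Nat.lt_0_1 HR).
Definition i1 : Fin.t (ar R) := Fin.of_nat_lt HR.
Lemma i0_nat : fin_nat i0 = 0. Proof. apply fin_nat_of. Qed.
Lemma i1_nat : fin_nat i1 = 1. Proof. apply fin_nat_of. Qed.

Definition succ {C} (p : C * Z) : C * Z := (fst p, (snd p + 1)%Z).

Definition relZ (c : nat) (s : Sym) (t : Fin.t (ar s) -> Fin.t (S c) * Z) : Prop :=
  s = R /\ exists p, forall i, t i = if fin_nat i =? 0 then p else succ p.

Definition Zs (c : nat) : structure ar := Structure ar (inhabits (@Fin.F1 c, 0%Z)) (relZ c).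

Lemma adj_succ c (p : dom (Zs c)) : adjacent (Zs c) p (succ p) /\ adjacent (Zs c) (succ p) p.
Proof.
  assert (Hne : p <> succ p).
  { destruct p as [a z]. unfold succ; simpl. intro H. injection H. lia. }
  assert (Hr : rel (Zs c) R (fun i => if fin_nat i =? 0 then p else succ p)).
  { split; auto. exists p; auto. }
  split; split; auto.
  - exists R, (fun i => if fin_nat i =? 0 then p else succ p), i0, i1. split; [exact Hr|]. rewrite i0_nat, i1_nat. simpl. auto.
  - exists R, (fun i => if fin_nat i =? 0 then p else succ p), i1, i0. split; [exact Hr|]. rewrite i0_nat, i1_nat. simpl. auto.
Qed.

Lemma adj_fst c (a b : dom (Zs c)) : adjacent (Zs c) a b -> fst a = fst b.
Proof.
  intros [_ [s [t [i [j [[Hs [p Hp]] [Ha Hb]]]]]]]. subst.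
  rewrite !Hp. destruct (fin_nat i =? 0), (fin_nat j =? 0); reflexivity.
Qed.

Lemma conn_fst c (a b : dom (Zs c)) : connected (Zs c) a b -> fst a = fst b.
Proof.
  intros [H|[l [[_ Hc] [_ Hl]]]]. subst; auto. subst b. revert a Hc.
  induction l as [|b l IH]; intros a Hc. reflexivity. simpl in Hc.
  destruct Hc as [Hab Hc]. rewrite last_cons'. rewrite <- (IH b Hc). apply adj_fst; auto.
Qed.

Lemma Zs_conn0 c (a : Fin.t (S c)) (z : Z) : connected (Zs c) (a, z) (a, 0%Z).
Proof.
  destruct (Z_le_gt_dec 0 z).
  - set (f := fun i : nat => (a, (z - Z.of_nat i)%Z) : dom (Zs c)).
    assert (H := connected_of_fun _ _ (Zs c) f (Z.to_nat z)).
    replace (f 0) with (a, z) in H by (unfold f; f_equal; lia).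
    replace (f (Z.to_nat z)) with (a, 0%Z) in H by (unfold f; f_equal; lia).
    apply H.
    + intros i j _ _ Hij. unfold f in Hij. injection Hij. lia.
    + intros i _. replace (f i) with (succ (f (S i))). apply adj_succ.
      unfold f, succ; simpl. f_equal. lia.
  - set (f := fun i : nat => (a, (z + Z.of_nat i)%Z) : dom (Zs c)).
    assert (H := connected_of_fun _ _ (Zs c) f (Z.to_nat (- z))).
    replace (f 0) with (a, z) in H by (unfold f; f_equal; lia).
    replace (f (Z.to_nat (-z))) with (a, 0%Z) in H by (unfold f; f_equal; lia).
    apply H.
    + intros i j _ _ Hij. unfold f in Hij. injection Hij. lia.
    + intros i _. replace (f (S i)) with (succ (f i)). apply adj_succ.
      unfold f, succ; simpl. f_equal. lia.
Qed.

Lemma Zs_atmost c : at_most_k_components (S c) (Zs c).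
Proof.
  exists (map (fun a => (a, 0%Z)) (all_fin (S c))). split.
  - rewrite length_map, all_fin_length. auto.
  - intros [a z]. exists (a, 0%Z). split. apply in_map_iff. exists a. split; auto. apply all_fin_In.
    apply Zs_conn0.
Qed.

Lemma Zs_not_atmost c : ~ at_most_k_components (S c) (Zs (S c)).
Proof.
  intros [reps [Hl Hr]].
  assert (Hi : incl (all_fin (S (S c))) (map fst reps)).
  { intros a _. destruct (Hr (a, 0%Z)) as [b [Hb Hc]]. apply conn_fst in Hc.
    apply in_map_iff. exists b. simpl in Hc. auto. }
  apply NoDup_incl_length in Hi. 2: apply all_fin_NoDup.
  rewrite all_fin_length, length_map in Hi. apply (Nat.nle_succ_diag_l (S c)). eapply Nat.le_trans; [exact Hi|exact Hl].
Qed.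

Definition rel1 {C} (d : Z) (p q : C * Z) : Prop := fst p = fst q /\ snd q = (snd p + d)%Z.

Lemma rel1_0 {C} (p q : C * Z) : rel1 0 p q <-> p = q.
Proof. destruct p, q; unfold rel1; simpl. split. intros [-> H]. f_equal. lia.
  intro H; injection H; intros; subst; split; auto; lia. Qed.
Lemma rel1_1 {C} (p q : C * Z) : rel1 1 p q <-> q = succ p.
Proof. destruct p, q; unfold rel1, succ; simpl. split. intros [-> H]. f_equal. lia.
  intro H; injection H; intros; subst; split; auto. Qed.
Lemma rel1_sym {C} d (p q : C * Z) : rel1 d p q <-> rel1 (- d) q p.
Proof. unfold rel1. split; intros [H1 H2]; split; auto; lia. Qed.
Lemma rel1_comp {C} a b (p q r : C * Z) : rel1 a p q -> (rel1 b q r <-> rel1 (a + b) p r).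
Proof. unfold rel1. intros [H1 H2]. split; intros [H3 H4]; split; try congruence; lia. Qed.
Lemma rel1_refl {C} d (p : C * Z) : rel1 d p p <-> d = 0%Z.
Proof. unfold rel1. split. intros [_ H]; lia. intros ->; split; auto; lia. Qed.

Definition good {C1 C2} (n : nat) (V : list nat) (e1 : nat -> C1 * Z) (e2 : nat -> C2 * Z) : Prop :=
  forall x y, In x V -> In y V -> forall d, (Z.abs d <= 2 ^ Z.of_nat n)%Z ->
    (rel1 d (e1 x) (e1 y) <-> rel1 d (e2 x) (e2 y)).

Lemma good_sym {C1 C2} n V (e1 : nat -> C1 * Z) (e2 : nat -> C2 * Z) : good n V e1 e2 -> good n V e2 e1.
Proof. intros H x y Hx Hy d Hd. symmetry. auto. Qed.

Lemma pow_S n : (2 ^ Z.of_nat (S n) = 2 * 2 ^ Z.of_nat n)%Z.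
Proof. rewrite Nat2Z.inj_succ, Z.pow_succ_r; lia. Qed.
Lemma pow_pos n : (1 <= 2 ^ Z.of_nat n)%Z.
Proof. induction n. simpl; lia. rewrite pow_S; lia. Qed.

Lemma good_extend {C1 C2} n V (e1 : nat -> C1 * Z) (e2 : nat -> C2 * Z) x d d' :
  good (S n) V e1 e2 ->
  (forall w δ, In w V -> (Z.abs δ <= 2 ^ Z.of_nat n)%Z -> (rel1 δ d (e1 w) <-> rel1 δ d' (e2 w))) ->
  good n (x :: V) (update e1 x d) (update e2 x d').
Proof.
  intros Hg Hk y w Hy Hw δ Hδ.
  destruct (Nat.eq_dec y x) as [->|Hyx]; destruct (Nat.eq_dec w x) as [->|Hwx];
    rewrite ?update_same, ?update_other by auto.
  - rewrite !rel1_refl. tauto.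
  - apply Hk; auto. destruct Hw; [congruence|auto].
  - rewrite (rel1_sym δ (e1 y)), (rel1_sym δ (e2 y)). apply Hk. destruct Hy; [congruence|auto]. lia.
  - apply Hg. destruct Hy; [congruence|auto]. destruct Hw; [congruence|auto].
    rewrite pow_S. lia.
Qed.

Lemma sum_bound {X} (g : X -> Z) l w : In w l ->
  (Z.abs (g w) <= fold_right (fun z acc => Z.abs (g z) + acc) 0 l)%Z.
Proof.
  assert (Hnn : forall l, (0 <= fold_right (fun z acc => Z.abs (g z) + acc) 0 l)%Z).
  { induction l0; simpl; lia. }
  induction l; simpl. tauto. intros [->|H]. specialize (Hnn l); lia. specialize (IHl H); lia.
Qed.

Lemma forth c1 c2 n V (e1 : nat -> Fin.t (S c1) * Z) (e2 : nat -> Fin.t (S c2) * Z) x d :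
  good (S n) V e1 e2 -> exists d', good n (x :: V) (update e1 x d) (update e2 x d').
Proof.
  intro Hg.
  destruct (classic (exists z, In z V /\ fst (e1 z) = fst d /\
            (Z.abs (snd d - snd (e1 z)) <= 2 ^ Z.of_nat n)%Z)) as [[z [Hz [Hf Hd]]]|Hno].
  - set (δ0 := (snd d - snd (e1 z))%Z).
    exists (fst (e2 z), (snd (e2 z) + δ0)%Z). apply good_extend; auto.
    intros w δ Hw Hδ.
    assert (H1 : rel1 δ0 (e1 z) d). { split; auto. unfold δ0; lia. }
    assert (H2 : rel1 δ0 (e2 z) (fst (e2 z), (snd (e2 z) + δ0)%Z)). { split; auto. }
    rewrite (rel1_comp _ _ _ _ _ H1), (rel1_comp _ _ _ _ _ H2). apply Hg; auto.
    rewrite pow_S. unfold δ0 in *. lia.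
  - set (M := (2 ^ Z.of_nat n + 1 + fold_right (fun z acc => Z.abs (snd (e2 z)) + acc) 0 V)%Z).
    exists (Fin.F1, M). apply good_extend; auto.
    intros w δ Hw Hδ. split.
    + intros [H1 H2]. exfalso. apply Hno. exists w. split; auto. split; auto. rewrite H2.
      replace (snd d - (snd d + δ))%Z with (- δ)%Z by lia. rewrite Z.abs_opp; auto.
    + intros [H1 H2]. exfalso. simpl in H2.
      assert (Hb := sum_bound (fun z => snd (e2 z)) V w Hw). simpl in Hb. unfold M in H2. lia.
Qed.

Fixpoint qr (phi : formula ar) : nat :=
  match phi with
  | F_imp p q => max (qr p) (qr q)
  | F_all _ p => S (qr p)
  | _ => 0
  end.

Lemma atom_dir c1 c2 n V (e1 : nat -> Fin.t (S c1) * Z) (e2 : nat -> Fin.t (S c2) * Z) s v :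
  good n V e1 e2 -> (forall i, In (v i) V) ->
  relZ c1 s (fun i => e1 (v i)) -> relZ c2 s (fun i => e2 (v i)).
Proof.
  intros Hg Hv [Hs [p Hp]]. subst s. split; auto. exists (e2 (v i0)). intro i.
  assert (Hp0 := Hp i0). rewrite i0_nat in Hp0. simpl in Hp0.
  destruct (fin_nat i =? 0) eqn:E.
  - apply Nat.eqb_eq in E. rewrite <- i0_nat in E. apply fin_nat_inj in E. subst; auto.
  - specialize (Hp i). rewrite E in Hp. rewrite <- Hp0 in Hp. apply rel1_1.
    apply Hg; auto. simpl. apply pow_pos. apply rel1_1. auto.
Qed.

Lemma EF c1 c2 : forall phi n V (e1 : nat -> Fin.t (S c1) * Z) (e2 : nat -> Fin.t (S c2) * Z),
  qr phi <= n -> (forall x, free_in x phi -> In x V) -> good n V e1 e2 ->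
  (fo_sat (Zs c1) e1 phi <-> fo_sat (Zs c2) e2 phi).
Proof.
  induction phi as [s t|x y| |p IHp q IHq|x p IHp]; intros n V e1 e2 Hq Hf Hg; simpl in *.
  - assert (Hv : forall i, In (t i) V) by (intro i; apply Hf; eauto).
    split. apply (atom_dir c1 c2 n V e1 e2 s t Hg Hv).
    apply (atom_dir c2 c1 n V e2 e1 s t (good_sym _ _ _ _ Hg) Hv).
  - rewrite <- !rel1_0. apply Hg; auto. simpl; lia.
  - tauto.
  - rewrite (IHp n V e1 e2), (IHq n V e1 e2); auto; try tauto; lia.
  - destruct n as [|n]. lia.
    assert (Hf' : forall y, free_in y p -> In y (x :: V)).
    { intros y Hy. destruct (Nat.eq_dec x y). left; auto. right; apply Hf; auto. }
    split.
    + intros H d'. destruct (forth c2 c1 n V e2 e1 x d' (good_sym _ _ _ _ Hg)) as [d Hd].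
      rewrite <- (IHp n (x :: V) (update e1 x d)); auto. lia. apply good_sym; auto.
    + intros H d. destruct (forth c1 c2 n V e1 e2 x d Hg) as [d' Hd].
      rewrite (IHp n (x :: V) (update e1 x d) (update e2 x d')); auto. lia.
Qed.

Theorem part1 k : 1 <= k -> ~ fo_expressible (at_most_k_components (ar:=ar) k).
Proof.
  intros Hk [phi [Hs Hphi]]. destruct k as [|k]. lia.
  apply (Zs_not_atmost k). apply Hphi. intro e2.
  assert (H := proj2 (Hphi (Zs k)) (Zs_atmost k) (fun _ => (Fin.F1, 0%Z))).
  rewrite (EF k (S k) phi (qr phi) [] _ e2) in H; auto.
  intros x y Hx; destruct Hx.
Qed.

End EF.

Section Comp.
Variables (Sym : Type) (ar : Sym -> nat) (R : Sym) (HR : 2 <= ar R) (k : nat) (Hk : 1 <= k).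
Notation I0 := (i0 Sym ar R HR). Notation I1 := (i1 Sym ar R HR).
Notation I0nat := (i0_nat Sym ar R HR). Notation I1nat := (i1_nat Sym ar R HR).

Definition tv (s : Sym) : Fin.t (ar s) -> nat := fun i => fin_nat i.
Definition phEmpty (s : Sym) : formula ar := Alls (seq 0 (ar s)) (Not (F_rel ar s (tv s))).
Definition phShape (j : nat) : formula ar :=
  Alls (seq 0 (ar R)) (F_imp (F_rel ar R (tv R)) (F_eq ar j 1)).
Definition Mk (x : nat) : formula ar := F_rel ar R (fun _ => x).
Definition Ea (x y : nat) : formula ar := F_rel ar R (fun i => if fin_nat i =? 0 then x else y).
Definition Eor (x y : nat) : formula ar := Or (Ea x y) (Ea y x).
Fixpoint D (n x y : nat) : formula ar :=
  match n with
  | 0 => F_eq ar x y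
  | S n => Or (D n x y) (Ex (2 + n) (And (Eor x (2 + n)) (D n (2 + n) y)))
  end.
Definition phFar (n : nat) : formula ar :=
  Alls [0; 1] (F_imp (Mk 0) (F_imp (Mk 1) (F_imp (Not (F_eq ar 0 1)) (Not (D n 0 1))))).
Definition BigAnd (l : list (formula ar)) : formula ar := fold_right (@And _ ar) (Not (F_bot ar)) l.
Definition pairsF : list (formula ar) :=
  flat_map (fun i => map (fun j => Not (F_eq ar i j)) (seq (S i) (k - i))) (seq 0 (S k)).
Definition marksF : list (formula ar) := map Mk (seq 0 (S k)).
Definition phMark : formula ar := Exs (seq 0 (S k)) (BigAnd (pairsF ++ marksF)).

Lemma sat_BigAnd A e l : fo_sat A e (BigAnd l) <-> forall p, In p l -> fo_sat A e p.
Proof.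
  unfold BigAnd in *. induction l; cbn [fold_right]. simpl. split; auto. intros _ _ []. 
  rewrite sat_And, IHl. split.
  intros [H1 H2] p [->|H]; auto. intro H; split; auto. apply H; simpl; auto. intros p Hp; apply H; simpl; auto.
Qed.

Definition E (A : structure ar) (a b : dom A) : Prop :=
  rel A R (fun i => if fin_nat i =? 0 then a else b).
Definition Eo A (a b : dom A) := E A a b \/ E A b a.
Fixpoint dist (A : structure ar) (n : nat) (a b : dom A) : Prop :=
  match n with
  | 0 => a = b
  | S n => dist A n a b \/ exists w, Eo A a w /\ dist A n w b
  end.

Lemma sat_Ea A e x y : fo_sat A e (Ea x y) <-> E A (e x) (e y).
Proof.
  unfold Ea, E; simpl. replace (fun i : Fin.t (ar R) => e (if fin_nat i =? 0 then x else y))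
    with (fun i : Fin.t (ar R) => if fin_nat i =? 0 then e x else e y). tauto.
  apply functional_extensionality; intro i; destruct (fin_nat i =? 0); auto.
Qed.

Lemma sat_D A : forall n e x y, (forall j, j < n -> x <> 2 + j /\ y <> 2 + j) ->
  (fo_sat A e (D n x y) <-> dist A n (e x) (e y)).
Proof.
  induction n; intros e x y H; simpl D; simpl dist. simpl; tauto.
  rewrite sat_Or, IHn, sat_Ex by (intros j Hj; apply H; lia).
  assert (Hx : x <> 2 + n) by (apply H; lia). assert (Hy : y <> 2 + n) by (apply H; lia).
  apply or_iff_compat_l. split.
  - intros [d Hd]. rewrite sat_And in Hd. destruct Hd as [H1 H2]. unfold Eor in H1.
    rewrite sat_Or, !sat_Ea in H1. rewrite IHn in H2.
    rewrite update_same, update_other in H1, H2 by auto.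
    exists d. split; auto.
    intros j Hj; split; [lia|apply H; lia].
  - intros [w [H1 H2]]. exists w. rewrite sat_And. unfold Eor. rewrite sat_Or, !sat_Ea, IHn.
    rewrite update_same, !update_other by auto. auto.
    intros j Hj; split; [lia|apply H; lia].
Qed.

Lemma dist_trans A : forall n m a b c, dist A n a b -> dist A m b c -> dist A (n + m) a c.
Proof.
  induction n; intros m a b c H1 H2; simpl in *. subst; auto.
  destruct H1 as [H1|[w [Hw H1]]]. left; eauto. right. exists w. split; eauto.
Qed.

Lemma dist_sym A : forall n a b, dist A n a b -> dist A n b a.
Proof.
  induction n; intros a b H. simpl in *; auto. cbn [dist] in H.
  destruct H as [H|[w [Hw H]]]. cbn [dist]; left; auto.
  apply IHn in H. replace (S n) with (n + 1) by lia. apply dist_trans with w; auto.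
  cbn [dist]. right. exists a. split; [unfold Eo in *; tauto | reflexivity].
Qed.

Lemma conn_dist A (Hadj : forall a b, adjacent A a b -> Eo A a b) a b :
  connected A a b -> exists n, dist A n a b.
Proof.
  intros [->|[l [[_ Hc] [_ <-]]]]. exists 0; simpl; auto.
  exists (length l). revert a Hc. induction l as [|b l IH]; intros a Hc. simpl; auto.
  simpl in Hc. destruct Hc as [Hab Hc]. rewrite last_cons'. simpl. right. exists b. split; auto.
Qed.

Lemma pigeon {X} (g : nat -> X) reps n : (forall i, i < n -> In (g i) reps) -> length reps < n ->
  exists i j, i < j < n /\ g i = g j.
Proof.
  intros Hin Hl. apply NNPP. intro Hno.
  assert (Hnd : NoDup (map g (seq 0 n))).
  { apply NoDup_map_NoDup_ForallPairs. 2: apply seq_NoDup.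
    intros a b Ha Hb Hab. apply in_seq in Ha, Hb.
    destruct (lt_eq_lt_dec a b) as [[H|H]|H]; auto; exfalso; apply Hno.
    exists a, b; split; auto; lia. exists b, a; split; auto; lia. }
  apply NoDup_incl_length with (l' := reps) in Hnd.
  rewrite length_map, length_seq in Hnd. lia.
  intros x Hx. apply in_map_iff in Hx. destruct Hx as [i [<- Hi]]. apply in_seq in Hi. apply Hin; lia.
Qed.

Definition ext {Dm} {m} (t : Fin.t m -> Dm) (d0 : Dm) (y : nat) : Dm :=
  match lt_dec y m with left H => t (Fin.of_nat_lt H) | right _ => d0 end.
Lemma ext_fin {Dm} {m} (t : Fin.t m -> Dm) d0 i : ext t d0 (fin_nat i) = t i.
Proof.
  unfold ext. destruct (lt_dec (fin_nat i) m) as [H|H].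
  - f_equal. apply fin_nat_inj. apply fin_nat_of.
  - exfalso. apply H. apply fin_nat_lt.
Qed.
Lemma ext_in {Dm} {m} (t : Fin.t m -> Dm) d0 j (H : j < m) : ext t d0 j = t (Fin.of_nat_lt H).
Proof.
  unfold ext. destruct (lt_dec j m) as [H'|H']. f_equal. apply fin_nat_inj. rewrite !fin_nat_of; auto.
  contradiction.
Qed.
Lemma ext_out {Dm} {m} (t : Fin.t m -> Dm) d0 y : ~ In y (seq 0 m) -> ext t d0 y = d0.
Proof.
  intro H. unfold ext. destruct (lt_dec y m); auto. exfalso; apply H; apply in_seq; lia.
Qed.
Lemma ext_tuple {Dm} {m} (t : Fin.t m -> Dm) d0 : (fun i => ext t d0 (fin_nat i)) = t.
Proof. apply functional_extensionality; intro; apply ext_fin. Qed.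

Lemma use_empty A s : (forall e, fo_sat A e (phEmpty s)) -> forall t, ~ rel A s t.
Proof.
  intros H t Ht. destruct (dom_ne A) as [d0].
  specialize (H (fun _ => d0)). unfold phEmpty in H. rewrite sat_Alls in H.
  specialize (H (ext t d0) (fun y Hy => ext_out t d0 y Hy)). simpl in H.
  unfold tv in H. rewrite ext_tuple in H. auto.
Qed.

Lemma use_shape A j (Hj1 : 1 <= j) (Hj : j < ar R) : (forall e, fo_sat A e (phShape j)) ->
  forall t, rel A R t -> t (Fin.of_nat_lt Hj) = t I1.
Proof.
  intros H t Ht. destruct (dom_ne A) as [d0].
  specialize (H (fun _ => d0)). unfold phShape in H. rewrite sat_Alls in H.
  specialize (H (ext t d0) (fun y Hy => ext_out t d0 y Hy)). simpl in H.
  unfold tv in H. rewrite ext_tuple in H. specialize (H Ht).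
  rewrite (ext_in t d0 j Hj), (ext_in t d0 1 HR) in H. exact H.
Qed.

Lemma use_far A n : (forall e, fo_sat A e (phFar n)) ->
  forall a b, rel A R (fun _ => a) -> rel A R (fun _ => b) -> a <> b -> ~ dist A n a b.
Proof.
  intros H a b Ha Hb Hab Hd.
  specialize (H (fun _ => a)). unfold phFar in H. rewrite sat_Alls in H.
  specialize (H (fun y => if y =? 0 then a else if y =? 1 then b else a)).
  simpl in H. refine (H _ Ha Hb Hab _).
  - intros y Hy. destruct y as [|[|y]]; simpl; auto; exfalso; apply Hy; auto.
  - assert (HD := sat_D A n (fun y => if y =? 0 then a else if y =? 1 then b else a) 0 1).
    simpl in HD. apply HD. intros; split; lia. auto.
Qed.

Lemma use_mark A : (forall e, fo_sat A e phMark) ->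
  exists x : nat -> dom A, (forall i j, i < j <= k -> x i <> x j) /\
    (forall i, i <= k -> rel A R (fun _ => x i)).
Proof.
  intro H. destruct (dom_ne A) as [d0]. specialize (H (fun _ => d0)).
  unfold phMark in H. rewrite sat_Exs in H. destruct H as [x [_ H]].
  rewrite sat_BigAnd in H. exists x. split.
  - intros i j Hij. assert (Hp : In (Not (F_eq ar i j)) (pairsF ++ marksF)).
    { apply in_or_app; left. unfold pairsF. apply in_flat_map. exists i. split.
      apply in_seq; lia. apply in_map_iff. exists j. split; auto. apply in_seq; lia. }
    apply H in Hp. exact Hp.
  - intros i Hi. assert (Hp : In (Mk i) (pairsF ++ marksF)).
    { apply in_or_app; right. apply in_map. apply in_seq; lia. }
    apply H in Hp. exact Hp.
Qed.

Lemma unsat_core A :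
  at_most_k_components k A ->
  (forall s, s <> R -> forall e, fo_sat A e (phEmpty s)) ->
  (forall j (Hj1 : 1 <= j) (Hj : j < ar R), forall e, fo_sat A e (phShape j)) ->
  (forall e, fo_sat A e phMark) ->
  (forall n e, fo_sat A e (phFar n)) -> False.
Proof.
  intros [reps [Hl Hr]] He Hs Hm Hf.
  assert (Hsh1 : forall t, rel A R t -> forall i, fin_nat i <> 0 -> t i = t I1).
  { intros t Ht i Hi. destruct (fin_nat i) as [|j] eqn:E0. congruence.
    assert (Hj : S j < ar R) by (rewrite <- E0; apply fin_nat_lt).
    rewrite <- (use_shape A (S j) ltac:(lia) Hj (Hs (S j) ltac:(lia) Hj) t Ht). f_equal.
    apply fin_nat_inj. rewrite fin_nat_of; auto. }
  assert (Hsh : forall t, rel A R t -> forall i, t i = t I0 \/ t i = t I1).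
  { intros t Ht i. destruct (fin_nat i) as [|j] eqn:E0.
    - left. f_equal. apply fin_nat_inj. rewrite E0, I0nat. auto.
    - right. apply Hsh1; auto. lia. }
  assert (Hpat : forall t, rel A R t -> E A (t I0) (t I1)).
  { intros t Ht. unfold E. replace (fun i => if fin_nat i =? 0 then t I0 else t I1) with t; auto.
    apply functional_extensionality; intro i. destruct (fin_nat i =? 0) eqn:E0.
    - f_equal. apply fin_nat_inj. apply Nat.eqb_eq in E0. rewrite E0, I0nat; auto.
    - apply Hsh1; auto. apply Nat.eqb_neq; auto. }
  assert (Hadj : forall a b, adjacent A a b -> Eo A a b).
  { intros a b [Hne [s [t [i [j [Ht [Hi Hj]]]]]]].
    destruct (classic (s = R)) as [->|Hsr]. 2: exfalso; exact (use_empty A s (He s Hsr) t Ht).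
    assert (HE := Hpat t Ht). subst a b.
    destruct (Hsh t Ht i) as [Hi|Hi], (Hsh t Ht j) as [Hj|Hj]; rewrite Hi, Hj in *;
      try (exfalso; apply Hne; reflexivity); unfold Eo; tauto. }
  destruct (use_mark A Hm) as [x [Hd Hmk]].
  destruct (dom_ne A) as [d0].
  set (g := fun i => epsilon (inhabits d0) (fun b => In b reps /\ connected A (x i) b)).
  assert (Hg : forall i, In (g i) reps /\ connected A (x i) (g i)).
  { intro i. apply (epsilon_spec (inhabits d0) (fun b => In b reps /\ connected A (x i) b)). apply Hr. }
  destruct (pigeon g reps (S k)) as [i [j [Hij Hgij]]]. intros; apply Hg. lia.
  destruct (conn_dist A Hadj _ _ (proj2 (Hg i))) as [n1 H1].
  destruct (conn_dist A Hadj _ _ (proj2 (Hg j))) as [n2 H2].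
  rewrite Hgij in H1. apply dist_sym in H2.
  apply (use_far A (n1 + n2) (Hf (n1 + n2)) (x i) (x j)).
  apply Hmk; lia. apply Hmk; lia. apply Hd; lia. eapply dist_trans; eauto.
Qed.


Definition mk N c := exists j, j <= k /\ c = j * S N.
Definition relN N (s : Sym) (t : Fin.t (ar s) -> nat) : Prop :=
  s = R /\ ((exists p, forall i, t i = if fin_nat i =? 0 then p else S p) \/
            (exists c, mk N c /\ forall i, t i = c)).
Definition MN N : structure ar := Structure ar (inhabits 0) (relN N).

Lemma adjN N p : adjacent (MN N) (S p) p.
Proof.
  split. apply Nat.neq_succ_diag_l.
  exists R, (fun i => if fin_nat i =? 0 then p else S p), I1, I0.
  split. split; auto. left; exists p; auto. rewrite I0nat, I1nat; simpl; auto.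
Qed.

Lemma MN_atmost N : at_most_k_components k (MN N).
Proof.
  exists [0]. split. simpl; lia. intro a. exists 0. split. left; auto.
  assert (H := connected_of_fun _ _ (MN N) (fun i => a - i) a).
  simpl in H. replace (a - 0) with a in H by lia. replace (a - a) with 0 in H by lia.
  apply H. intros i j Hi Hj Hij; lia.
  intros i Hi. replace (a - i) with (S (a - S i)) by lia. apply adjN.
Qed.

Lemma MN_empty N s : s <> R -> forall e, fo_sat (MN N) e (phEmpty s).
Proof. intros Hs e. unfold phEmpty. rewrite sat_Alls. intros e' _. simpl. intros [H _]. auto. Qed.

Lemma MN_shape N j : 1 <= j -> j < ar R -> forall e, fo_sat (MN N) e (phShape j).
Proof.
  intros Hj1 Hj e. unfold phShape. rewrite sat_Alls. intros e' _. simpl. unfold tv.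
  intros [_ [[p Hp]|[c [_ Hc]]]].
  - assert (H1 := Hp (Fin.of_nat_lt Hj)). assert (H2 := Hp I1).
    rewrite fin_nat_of in H1. rewrite I1nat in H2. simpl in H2. destruct j; [lia|]. simpl in H1. congruence.
  - assert (H1 := Hc (Fin.of_nat_lt Hj)). assert (H2 := Hc I1).
    rewrite fin_nat_of in H1. rewrite I1nat in H2. congruence.
Qed.

Lemma MN_mark N : forall e, fo_sat (MN N) e phMark.
Proof.
  intro e. unfold phMark. rewrite sat_Exs. exists (fun y => if y <=? k then y * S N else e y). split.
  - intros y Hy. destruct (y <=? k) eqn:E0; auto. exfalso; apply Hy; apply in_seq; apply Nat.leb_le in E0; lia.
  - rewrite sat_BigAnd. intros p Hp. apply in_app_or in Hp. destruct Hp as [Hp|Hp].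
    + unfold pairsF in Hp. apply in_flat_map in Hp. destruct Hp as [i [Hi Hp]].
      apply in_map_iff in Hp. destruct Hp as [j [<- Hj]]. apply in_seq in Hi, Hj. simpl.
      rewrite (proj2 (Nat.leb_le i k)), (proj2 (Nat.leb_le j k)) by lia. intro H. nia.
    + unfold marksF in Hp. apply in_map_iff in Hp. destruct Hp as [i [<- Hi]]. apply in_seq in Hi.
      simpl. rewrite (proj2 (Nat.leb_le i k)) by lia. split; auto. right. exists (i * S N).
      split; auto. exists i; split; auto; lia.
Qed.

Lemma EN N a b : E (MN N) a b -> b = S a \/ b = a.
Proof.
  unfold E; simpl. intros [_ [[p Hp]|[c [_ Hc]]]].
  - assert (H0 := Hp I0). assert (H1 := Hp I1). rewrite I0nat in H0. rewrite I1nat in H1.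
    simpl in *. left; congruence.
  - assert (H0 := Hc I0). assert (H1 := Hc I1). rewrite I0nat in H0. rewrite I1nat in H1.
    simpl in *. right; congruence.
Qed.

Lemma MN_dist N : forall n a b, dist (MN N) n a b -> a <= b + n /\ b <= a + n.
Proof.
  induction n; intros a b H; simpl in H. subst; lia.
  destruct H as [H|[w [Hw H]]]. apply IHn in H; lia. apply IHn in H.
  destruct Hw as [Hw|Hw]; apply EN in Hw; lia.
Qed.

Lemma MN_mk N a : rel (MN N) R (fun _ => a) -> mk N a.
Proof.
  simpl. intros [_ [[p Hp]|[c [Hc Hc']]]].
  - assert (H0 := Hp I0). assert (H1 := Hp I1). rewrite I0nat in H0. rewrite I1nat in H1.
    simpl in *. lia.
  - rewrite (Hc' I0); auto.
Qed.

Lemma MN_far N n : n <= N -> forall e, fo_sat (MN N) e (phFar n).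
Proof.
  intros Hn e. unfold phFar. rewrite sat_Alls. intros e' _. simpl. intros H0 H1 Hne HD.
  apply (MN_mk N) in H0, H1. destruct H0 as [j1 [Hj1 E1]]. destruct H1 as [j2 [Hj2 E2]].
  rewrite sat_D in HD by (intros; split; lia). apply MN_dist in HD.
  assert (j1 <> j2) by (intro; subst; congruence).
  rewrite E1, E2 in HD.
  assert (S N * j1 + S N <= S N * j2 \/ S N * j2 + S N <= S N * j1) by nia. nia.
Qed.

Variables (L : Type) (sat : structure ar -> L -> Prop) (phiP : L)
  (HP : forall A, sat A phiP <-> at_most_k_components k A) (Hext : extends_FO sat)
  (h : Sym -> nat) (Hh : forall x y, h x = h y -> x = y).

Definition trL (phi : formula ar) : L :=
  epsilon (inhabits phiP) (fun psi => forall A, sat A psi <-> forall e, fo_sat A e phi).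
Lemma trL_spec phi A : sat A (trL phi) <-> forall e, fo_sat A e phi.
Proof.
  revert A. unfold trL.
  apply (epsilon_spec (inhabits phiP) (fun psi => forall A, sat A psi <-> forall e, fo_sat A e phi)).
  apply Hext. apply fo_expr_any.
Qed.

Definition empt (q : nat) : L :=
  match excluded_middle_informative (exists s, s <> R /\ h s = q) with
  | left H => trL (phEmpty (proj1_sig (constructive_indefinite_description _ H)))
  | right _ => phiP
  end.
Definition shp (q : nat) : L := trL (phShape (if andb (1 <=? q) (q <? ar R) then q else 1)).
Definition fenum (n : nat) : L :=
  match n mod 5 with
  | 0 => phiP | 1 => trL phMark | 2 => trL (phFar (n / 5)) | 3 => shp (n / 5) | _ => empt (n / 5)
  end.

Lemma fenum_model N n : n <= N -> sat (MN N) (fenum n).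
Proof.
  intro Hn. unfold fenum. destruct (n mod 5) as [|[|[|[|r]]]].
  - apply HP, MN_atmost.
  - apply trL_spec, MN_mark.
  - apply trL_spec, MN_far. assert (n / 5 <= n) by (apply Nat.Div0.div_le_upper_bound; lia). lia.
  - unfold shp. apply trL_spec. destruct (andb (1 <=? n / 5) (n / 5 <? ar R)) eqn:E0.
    + apply andb_prop in E0; destruct E0 as [E1 E2]. apply Nat.leb_le in E1; apply Nat.ltb_lt in E2.
      apply MN_shape; auto.
    + apply MN_shape; lia.
  - unfold empt. destruct excluded_middle_informative as [H|H].
    + apply trL_spec. apply MN_empty.
      destruct (constructive_indefinite_description _ H) as [s [Hs Hq]]; simpl; auto.
    + apply HP, MN_atmost.
Qed.

Lemma fenum_idx r q : r < 5 -> (r + q * 5) mod 5 = r /\ (r + q * 5) / 5 = q.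
Proof.
  intro H. split. rewrite Nat.Div0.mod_add. apply Nat.mod_small; auto.
  rewrite Nat.div_add by lia. rewrite Nat.div_small; auto.
Qed.

Lemma unsat_all A : (forall n, sat A (fenum n)) -> False.
Proof.
  intro H. apply (unsat_core A).
  - apply HP. exact (H 0).
  - intros s Hs. apply trL_spec. specialize (H (4 + h s * 5)). unfold fenum in H.
    destruct (fenum_idx 4 (h s)) as [E1 E2]. lia. rewrite E1, E2 in H. unfold empt in H.
    destruct excluded_middle_informative as [H'|H'].
    + destruct (constructive_indefinite_description _ H') as [s' [Hs' Hh']]; simpl in H.
      apply Hh in Hh'. subst; auto.
    + exfalso. apply H'. exists s; auto.
  - intros j Hj1 Hj. apply trL_spec. specialize (H (3 + j * 5)). unfold fenum in H.
    destruct (fenum_idx 3 j) as [E1 E2]. lia. rewrite E1, E2 in H. unfold shp in H.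
    rewrite (proj2 (Nat.leb_le 1 j) Hj1), (proj2 (Nat.ltb_lt j (ar R)) Hj) in H. simpl in H. exact H.
  - apply trL_spec. exact (H 1).
  - intros n. apply trL_spec. specialize (H (2 + n * 5)). unfold fenum in H.
    destruct (fenum_idx 2 n) as [E1 E2]. lia. rewrite E1, E2 in H. exact H.
Qed.

Lemma part2 : ~ aleph0_compact sat.
Proof.
  intro Hc. destruct (Hc (fun psi => exists n, fenum n = psi)) as [A HA].
  - exists fenum. intros phi [n Hn]; eauto.
  - intros l Hl. assert (Hb : exists N, forall psi, In psi l -> exists n, n <= N /\ fenum n = psi).
    { induction l as [|a l IH]. exists 0; intros _ [].
      destruct IH as [N HN]. intros; apply Hl; right; auto.
      destruct (Hl a (or_introl eq_refl)) as [n Hn]. exists (max n N).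
      intros psi [<-|Hp]. exists n; split; [lia|auto].
      destruct (HN psi Hp) as [m [Hm Hm']]. exists m; split; [lia|auto]. }
    destruct Hb as [N HN]. exists (MN N). intros psi Hp. destruct (HN psi Hp) as [n [Hn <-]].
    apply fenum_model; auto.
  - apply (unsat_all A). intro n. apply HA. eauto.
Qed.

End Comp.

Lemma sc_compact {Sym} {ar : Sym -> nat} (L : Type) (sat : structure ar -> L -> Prop) (psi0 : L) :
  closed_under_negation sat -> has_sound_complete_proof_system sat -> aleph0_compact sat.
Proof.
  intros Hneg [Pi [p [c [Hs Hcpl]]]] Gamma _ Hfs. apply NNPP; intro Hns.
  destruct (Hneg psi0) as [npsi Hn].
  assert (Hent : forall psi, entails sat Gamma psi).
  { intros psi A HA. exfalso. apply Hns. exists A; auto. }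
  destruct (Hcpl Gamma psi0 (Hent psi0)) as [pi1 [Hc1 Hp1]].
  destruct (Hcpl Gamma npsi (Hent npsi)) as [pi2 [Hc2 Hp2]].
  destruct (Hfs (p pi1 ++ p pi2)) as [A HA].
  { intros phi Hphi. apply in_app_or in Hphi. destruct Hphi; auto. }
  assert (H1 := Hs pi1 A). assert (H2 := Hs pi2 A). rewrite Hc1 in H1. rewrite Hc2 in H2.
  apply (proj1 (Hn A)). apply H2. intros; apply HA; apply in_or_app; auto.
  apply H1. intros; apply HA; apply in_or_app; auto.
Qed.

Theorem mainTheorem9 (Sym : Type) (ar : Sym -> nat) (Hcount : countable Sym)
  (R : Sym) (HR : 2 <= ar R) (k : nat) (Hk : 1 <= k)
  (HQ : 2 <= k -> exists Q : Sym, Q <> R) :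
  ~ fo_expressible (at_most_k_components (ar:=ar) k) /\
  (forall (L : Type) (sat : structure ar -> L -> Prop),
     iso_invariant sat -> extends_FO sat ->
     expresses sat (at_most_k_components k) ->
     ~ aleph0_compact sat /\
     (closed_under_negation sat -> ~ has_sound_complete_proof_system sat)).
Proof.
  split. apply (part1 Sym ar R HR k Hk).
  intros L sat _ Hext [phiP HP]. destruct Hcount as [h Hh].
  assert (Hnc : ~ aleph0_compact sat).
  { eapply part2; eauto. }
  split; auto. intros Hneg Hsys. apply Hnc. apply (sc_compact L sat phiP); auto.
Qed.
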